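(* Let $t$ be a well-behaved behavior. Then the set $\partial_{\simeq} t$ of dissimilar descendants of $t$ is finite; equivalently, the set of descendants of $t$ contains only finitely many $\simeq$-equivalence classes.
   Context: Let $\Sigma$ be a finite alphabet. Behaviors are the terms generated by $r,s ::= \phi \mid \varepsilon \mid x\ (x\in\Sigma) \mid r+s \mid r\cdot s \mid r^* \mid \mathrm{fork}(r)$. For words $v,w\in\Sigma^*$ the shuffle $v\| w\subseteq \Sigma^*$ is defined by $\varepsilon\|w=\{w\}$, $v\|\varepsilon=\{v\}$, $xv\|yw=\{x\}\cdot(v\|yw)\cup\{y\}\cdot(xv\|w)$ for $x,y\in\Sigma$, and it is lifted to languages by $L\|M=\bigcup_{v\in L,w\in M} v\|w$; $L\cdot M$ denotes concatenation of languages. For $K\subseteq\Sigma^*$ the trace language $L(r,K)\subseteq\Sigma^*$ is defined by structural recursion: $L(\phi,K)=\emptyset$, $L(\varepsilon,K)=K$, $L(x,K)=\{x\}\cdot K$, $L(r+s,K)=L(r,K)\cup L(s,K)$, $L(r\cdot s,K)=L(r,L(s,K))$, $L(r^*,K)$ is the least fixpoint (w.r.t. $\subseteq$) of the monotone map $X\mapsto L(r,X)\cup K$, and $L(\mathrm{fork}(r),K)=L(r)\|K$, where $L(r)=L(r,\{\varepsilon\})$. Semantic containment: $r\sqsubseteq s$ iff $L(r,K)\subseteq L(s,K)$ for all $K\subseteq\Sigma^*$. The concurrent part $\mathcal C(r)$ is the behavior defined by: $\mathcal C(\phi)=\phi$, $\mathcal C(\varepsilon)=\varepsilon$, $\mathcal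 C(x)=\phi$, $\mathcal C(r+s)=\mathcal C(r)+\mathcal C(s)$, $\mathcal C(r\cdot s)=\mathcal C(r)\cdot\mathcal C(s)$, $\mathcal C(r^* )=\mathcal C(r)^*$, $\mathcal C(\mathrm{fork}(r))=\mathrm{fork}(r)$. The derivative $\partial_x r$ of a behavior $r$ by $x\in\Sigma$ is the behavior defined by: $\partial_x\phi=\phi$, $\partial_x\varepsilon=\phi$, $\partial_x y=\varepsilon$ if $y=x$ and $\phi$ otherwise, $\partial_x(r+s)=\partial_x r+\partial_x s$, $\partial_x(r\cdot s)=\partial_x r\cdot s+\mathcal C(r)\cdot\partial_x s$, $\partial_x(r^* )=\partial_x r\cdot r^*$, $\partial_x(\mathrm{fork}(r))=\mathrm{fork}(\partial_x r)$; it is extended to words by $\partial_\varepsilon r=r$ and $\partial_{xw}r=\partial_w(\partial_x r)$. A descendant of $r$ is any behavior $\partial_w r$ with $w\in\Sigma^*$; $\partial r$ denotes the set of descendants of $r$. Similarity $\simeq$ is the smallest relation on behaviors that is reflexive, symmetric, transitive, closed under contexts (if $s\simeq t$ then $E[s]\simeq E[t]$ for every context $E ::= [\,] \mid E^* \mid E\cdot s \mid r\cdot E \mid E+s \mid r+E \mid \mathrm{fork}(E)$, where $E[t]$ replaces the hole by $t$), and contains the axioms $r+(s+t)\simeq(r+s)+t$, $r+s\simeq s+r$, $r+r\simeq r$, $r+\phi\simeq r$, $\phi+r\simeq r$, $\varepsilon\cdot r\simeq r$, $r\cdot\varepsilon\simeq r$, $\varepsilon^*\simeq\varepsilon$, $\mathrm{fork}(\varepsilon)\simeq\varepsilon$,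 $\phi\cdot r\simeq\phi$, $r\cdot\phi\simeq\phi$, $\phi^*\simeq\varepsilon$, $\mathrm{fork}(\phi)\simeq\phi$. The set of dissimilar descendants $\partial_{\simeq} r$ is a set containing exactly one (arbitrarily chosen) representative of each $\simeq$-equivalence class of elements of $\partial r$. A behavior $t$ is well-behaved if every subterm of $t$ of the form $r^*$ satisfies $\mathcal C(\partial_w r)\sqsubseteq\varepsilon$ for all $w\in\Sigma^*$. *)

(* Defs.v *)
From mathcomp Require Import all_boot.

Set Implicit Arguments.
Unset Strict Implicit.
Unset Printing Implicit Defensive.

Section Behaviors.
Variable S : finType.

Inductive beh : Type :=
| Phi : beh
| Eps : beh
| Sym : S -> beh
| Plus : beh -> beh -> beh
| Seq : beh -> beh -> beh
| Star : beh -> beh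
| Fork : beh -> beh.

Definition lang := seq S -> Prop.

Inductive shuffle : seq S -> seq S -> seq S -> Prop :=
| shuffle_nil_l w : shuffle [::] w w
| shuffle_nil_r v : shuffle v [::] v
| shuffle_left x y v w u :
    shuffle v (y :: w) u -> shuffle (x :: v) (y :: w) (x :: u)
| shuffle_right x y v w u :
    shuffle (x :: v) w u -> shuffle (x :: v) (y :: w) (y :: u).

Definition eps_lang : lang := fun w => w = [::].

(* trace language L(r, K); the star case is the least fixpoint of
   X |-> L(r,X) \cup K, given as the intersection of all its prefixpoints *)
Fixpoint L (r : beh) (K : lang) : lang :=
  match r with
  | Phi => fun _ => False
  | Eps => K
  | Sym x => fun w => exists v, w = x :: v /\ K v
  | Plus r1 r2 => fun w => L r1 K w \/ L r2 K w
  | Seq r1 r2 => L r1 (L r2 K)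
  | Star r1 => fun w => forall X : lang,
        (forall v, L r1 X v \/ K v -> X v) -> X w
  | Fork r1 => fun u => exists v w,
        L r1 eps_lang v /\ K w /\ shuffle v w u
  end.

Definition contained (r s : beh) : Prop :=
  forall (K : lang) (w : seq S), L r K w -> L s K w.

Fixpoint conc (r : beh) : beh :=
  match r with
  | Phi => Phi
  | Eps => Eps
  | Sym _ => Phi
  | Plus r1 r2 => Plus (conc r1) (conc r2)
  | Seq r1 r2 => Seq (conc r1) (conc r2)
  | Star r1 => Star (conc r1)
  | Fork r1 => Fork r1
  end.

Fixpoint deriv (x : S) (r : beh) : beh :=
  match r with
  | Phi => Phi
  | Eps => Phi
  | Sym y => if y == x then Eps else Phi
  | Plus r1 r2 => Plus (deriv x r1) (deriv x r2)
  | Seq r1 r2 => Plus (Seq (deriv x r1) r2) (Seq (conc r1) (deriv x r2))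
  | Star r1 => Seq (deriv x r1) (Star r1)
  | Fork r1 => Fork (deriv x r1)
  end.

Fixpoint deriv_word (w : seq S) (r : beh) : beh :=
  match w with
  | [::] => r
  | x :: w' => deriv_word w' (deriv x r)
  end.

Definition descendant (r r' : beh) : Prop :=
  exists w : seq S, r' = deriv_word w r.

Inductive ctx : Type :=
| CHole : ctx
| CStar : ctx -> ctx
| CSeqL : ctx -> beh -> ctx
| CSeqR : beh -> ctx -> ctx
| CPlusL : ctx -> beh -> ctx
| CPlusR : beh -> ctx -> ctx
| CFork : ctx -> ctx.

Fixpoint plug (E : ctx) (t : beh) : beh :=
  match E with
  | CHole => t
  | CStar E' => Star (plug E' t)
  | CSeqL E' s => Seq (plug E' t) s
  | CSeqR r E' => Seq r (plug E' t)
  | CPlusL E' s => Plus (plug E' t) s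
  | CPlusR r E' => Plus r (plug E' t)
  | CFork E' => Fork (plug E' t)
  end.

Inductive sim : beh -> beh -> Prop :=
| sim_refl r : sim r r
| sim_sym r s : sim r s -> sim s r
| sim_trans r s t : sim r s -> sim s t -> sim r t
| sim_ctx E s t : sim s t -> sim (plug E s) (plug E t)
| sim_plusA r s t : sim (Plus r (Plus s t)) (Plus (Plus r s) t)
| sim_plusC r s : sim (Plus r s) (Plus s r)
| sim_plusI r : sim (Plus r r) r
| sim_plus0r r : sim (Plus r Phi) r
| sim_plus0l r : sim (Plus Phi r) r
| sim_seq1l r : sim (Seq Eps r) r
| sim_seq1r r : sim (Seq r Eps) r
| sim_star1 : sim (Star Eps) Eps
| sim_fork1 : sim (Fork Eps) Eps
| sim_seq0l r : sim (Seq Phi r) Phi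
| sim_seq0r r : sim (Seq r Phi) Phi
| sim_star0 : sim (Star Phi) Eps
| sim_fork0 : sim (Fork Phi) Phi.

Inductive subterm : beh -> beh -> Prop :=
| sub_refl r : subterm r r
| sub_plusl u r s : subterm u r -> subterm u (Plus r s)
| sub_plusr u r s : subterm u s -> subterm u (Plus r s)
| sub_seql u r s : subterm u r -> subterm u (Seq r s)
| sub_seqr u r s : subterm u s -> subterm u (Seq r s)
| sub_star u r : subterm u r -> subterm u (Star r)
| sub_fork u r : subterm u r -> subterm u (Fork r).

Definition well_behaved (t : beh) : Prop :=
  forall r : beh, subterm (Star r) t ->
    forall w : seq S, contained (conc (deriv_word w r)) Eps.

End Behaviors.

(* Main.v *)
From Pilot Require Import Defs.
From mathcomp Require Import all_boot.
From Stdlib Require List.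
From Stdlib Require Import Classical.

Set Implicit Arguments.
Unset Strict Implicit.
Unset Printing Implicit Defensive.

Section P.
Variable S : finType.
Notation B := (beh S).
Implicit Types a b c r s t u e : B.

Lemma simC a b : sim a b -> sim b a. Proof. exact: sim_sym. Qed.
Lemma simT a b c : sim a b -> sim b c -> sim a c. Proof. exact: sim_trans. Qed.

Lemma sim_plus a a' b b' : sim a a' -> sim b b' -> sim (Plus a b) (Plus a' b').
Proof.
move=> H1 H2; apply: (@simT _ (Plus a' b) _); [exact: (sim_ctx (CPlusL (CHole S) b) H1) | exact: (sim_ctx (CPlusR a' (CHole S)) H2)].
Qed.
Lemma sim_seq a a' b b' : sim a a' -> sim b b' -> sim (Seq a b) (Seq a' b').
Proof.
move=> H1 H2; apply: (@simT _ (Seq a' b) _); [exact: (sim_ctx (CSeqL (CHole S) b) H1) | exact: (sim_ctx (CSeqR a' (CHole S)) H2)].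
Qed.
Lemma sim_star a a' : sim a a' -> sim (Star a) (Star a').
Proof. move=> H; exact: (sim_ctx (CStar (CHole S)) H). Qed.
Lemma sim_fork a a' : sim a a' -> sim (Fork a) (Fork a').
Proof. move=> H; exact: (sim_ctx (CFork (CHole S)) H). Qed.
Lemma sim_plug E a b : sim a b -> sim (plug E a) (plug E b).
Proof. exact: sim_ctx. Qed.

Lemma conc_sim a b : sim a b -> sim (conc a) (conc b).
Proof.
elim => /=.
- move=> r; exact: sim_refl.
- move=> r s _; exact: simC.
- move=> r s t' _ H1 _ H2; exact: simT H1 H2.
- move=> E s t' Hst IH; elim: E => //= [E IHE|E IHE s'|r' E IHE|E IHE s'|r' E IHE|E IHE].
  + exact: sim_star.
  + exact: sim_seq IHE (sim_refl _).
  + exact: sim_seq (sim_refl _) IHE.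
  + exact: sim_plus IHE (sim_refl _).
  + exact: sim_plus (sim_refl _) IHE.
  + exact: sim_fork (sim_plug E Hst).
- move=> *; exact: sim_plusA.
- move=> *; exact: sim_plusC.
- move=> *; exact: sim_plusI.
- move=> *; exact: sim_plus0r.
- move=> *; exact: sim_plus0l.
- move=> *; exact: sim_seq1l.
- move=> *; exact: sim_seq1r.
- exact: sim_star1.
- exact: sim_fork1.
- move=> *; exact: sim_seq0l.
- move=> *; exact: sim_seq0r.
- exact: sim_star0.
- exact: sim_fork0.
Qed.

Lemma deriv_sim x a b : sim a b -> sim (deriv x a) (deriv x b).
Proof.
elim => /=.
- move=> r; exact: sim_refl.
- move=> r s _; exact: simC.
- move=> r s t' _ H1 _ H2; exact: simT H1 H2.
- move=> E s t' Hst IH; elim: E => //= [E IHE|E IHE s'|r' E IHE|E IHE s'|r' E IHE|E IHE].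
  + exact: sim_seq IHE (sim_star (sim_plug E Hst)).
  + apply: sim_plus; first exact: sim_seq IHE (sim_refl _).
    exact: sim_seq (conc_sim (sim_plug E Hst)) (sim_refl _).
  + apply: sim_plus; first exact: sim_seq (sim_refl _) (sim_plug E Hst).
    exact: sim_seq (sim_refl _) IHE.
  + exact: sim_plus IHE (sim_refl _).
  + exact: sim_plus (sim_refl _) IHE.
  + exact: sim_fork IHE.
- move=> *; exact: sim_plusA.
- move=> *; exact: sim_plusC.
- move=> *; exact: sim_plusI.
- move=> *; exact: sim_plus0r.
- move=> *; exact: sim_plus0l.
- move=> r. apply: simT (sim_plus (sim_seq0l _) (sim_seq1l _)) _. exact: sim_plus0l.
- move=> r. apply: simT (sim_plus (sim_seq1r _) (sim_seq0r _)) _. exact: sim_plus0r.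
- exact: sim_seq0l.
- exact: sim_fork0.
- move=> r. apply: simT (sim_plus (sim_seq0l _) (sim_seq0l _)) _. exact: sim_plus0l.
- move=> r. apply: simT (sim_plus (sim_seq0r _) (sim_seq0r _)) _. exact: sim_plus0l.
- exact: sim_seq0l.
- exact: sim_fork0.
Qed.

Notation PHI := (Phi S).
Notation EPS := (Eps S).

Fixpoint sumL (l : list B) : B :=
  match l with nil => PHI | cons a l' => Plus a (sumL l') end.

Definition incl (A F : list B) := forall a, List.In a A -> List.In a F.
Definition span (F : list B) u := exists A, incl A F /\ sim u (sumL A).
Definition closed (F : list B) :=
  forall f, List.In f F -> (forall x, span F (deriv x f)) /\ span F (conc f).

Lemma sumL_app A C : sim (Plus (sumL A) (sumL C)) (sumL (app A C)).
Proof.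
elim: A => [|a A IH] /=; first exact: sim_plus0l.
apply: simT (simC (sim_plusA _ _ _)) _.
exact: sim_plus (sim_refl _) IH.
Qed.

Lemma span_plus F a b : span F a -> span F b -> span F (Plus a b).
Proof.
move=> [A [HA Ha]] [C [HC Hc]]; exists (app A C); split.
- move=> x Hx; case: (List.in_app_or _ _ _ Hx) => ?; [exact: HA|exact: HC].
- exact: simT (sim_plus Ha Hc) (sumL_app A C).
Qed.

Lemma span_sim F u v : sim u v -> span F v -> span F u.
Proof. move=> H [A [HA Hv]]; exists A; split => //; exact: simT H Hv. Qed.

Lemma span_elem F f : List.In f F -> span F f.
Proof.
move=> H; exists (cons f nil); split; first by move=> x [<-|[]].
exact: simC (sim_plus0r _).
Qed.

Lemma span_phi F : span F PHI.
Proof. exists nil; split; [by move=> x []|exact: sim_refl]. Qed.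

Lemma span_mono F F' u : incl F F' -> span F u -> span F' u.
Proof. move=> H [A [HA Hu]]; exists A; split => // x /HA; exact: H. Qed.

Lemma span_sumL F A : incl A F -> span F (sumL A).
Proof. move=> H; exists A; split => //; exact: sim_refl. Qed.

Lemma closed_deriv_sumL F A x : closed F -> incl A F -> span F (deriv x (sumL A)).
Proof.
move=> HF; elim: A => [|a A IH] HA /=; first exact: span_phi.
apply: span_plus.
- have [H _] := HF a (HA a (or_introl erefl)); exact: H.
- apply: IH => y Hy; apply: HA; by right.
Qed.

Lemma closed_conc_sumL F A : closed F -> incl A F -> span F (conc (sumL A)).
Proof.
move=> HF; elim: A => [|a A IH] HA /=; first exact: span_phi.
apply: span_plus.
- have [_ H] := HF a (HA a (or_introl erefl)); exact: H.
- apply: IH => y Hy; apply: HA; by right.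
Qed.

Lemma closed_deriv F u x : closed F -> span F u -> span F (deriv x u).
Proof.
move=> HF [A [HA Hu]]; apply: span_sim (deriv_sim x Hu) _.
exact: closed_deriv_sumL.
Qed.

Lemma closed_conc F u : closed F -> span F u -> span F (conc u).
Proof.
move=> HF [A [HA Hu]]; apply: span_sim (conc_sim Hu) _.
exact: closed_conc_sumL.
Qed.

Lemma closed_word F u w : closed F -> span F u -> span F (deriv_word w u).
Proof.
move=> HF; elim: w u => [|x w IH] u Hu //=.
apply: IH; exact: closed_deriv.
Qed.

Lemma plus_in a A : List.In a A -> sim (Plus a (sumL A)) (sumL A).
Proof.
elim: A => [|b A IH] //= [<-|H].
- apply: simT (sim_plusA _ _ _) _; exact: sim_plus (sim_plusI _) (sim_refl _).
- apply: simT (sim_plusA _ _ _) _.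
  apply: simT (sim_plus (sim_plusC _ _) (sim_refl _)) _.
  apply: simT (simC (sim_plusA _ _ _)) _.
  exact: sim_plus (sim_refl _) (IH H).
Qed.

Lemma absorb A C : incl A C -> sim (Plus (sumL A) (sumL C)) (sumL C).
Proof.
elim: A => [|a A IH] H /=; first exact: sim_plus0l.
apply: simT (simC (sim_plusA _ _ _)) _.
apply: simT (sim_plus (sim_refl _) (IH _)) _.
- move=> x Hx; apply: H; by right.
- apply: plus_in; apply: H; by left.
Qed.

Lemma sameset A C : incl A C -> incl C A -> sim (sumL A) (sumL C).
Proof.
move=> H1 H2.
apply: simT (simC (absorb H2)) _.
apply: simT (sim_plusC _ _) _.
exact: absorb H1.
Qed.

Fixpoint subs (F : list B) : list (list B) :=
  match F with
  | nil => cons nil nil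
  | cons f F' => app (List.map (cons f) (subs F')) (subs F')
  end.

Lemma subs_incl F A : List.In A (subs F) -> incl A F.
Proof.
elim: F A => [|f F IH] A /=.
- by move=> [<-|[]] x [].
- move=> Hin; case: (List.in_app_or _ _ _ Hin) => [/List.in_map_iff [A' [<- HA']]|HA].
  + move=> x [<-|Hx]; [by left|right; exact: IH HA' _ Hx].
  + move=> x Hx; right; exact: IH HA _ Hx.
Qed.

Lemma subs_pick F (P : B -> Prop) :
  exists A, List.In A (subs F) /\ forall x, List.In x A <-> List.In x F /\ P x.
Proof.
elim: F => [|f F [A [HA HP]]] /=.
- exists nil; split; first by left. by move=> x; split => [[]|[[]]].
- case: (classic (P f)) => Pf.
  + exists (cons f A); split.
    * apply: List.in_or_app; left; exact: List.in_map.
    * move=> x /=; split.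
      - by move=> [<-|/HP [H1 H2]]; split => //; [left|right].
      - move=> [[<-|H1] H2]; [by left|right; exact/HP].
  + exists A; split; first by apply: List.in_or_app; right.
    move=> x; split.
    * by move/HP => [H1 H2]; split => //; right.
    * move=> [[E|H1] H2]; first by subst x.
      exact/HP.
Qed.

Lemma span_norm F u : span F u -> exists A, List.In A (subs F) /\ sim u (sumL A).
Proof.
move=> [A [HA Hu]].
case: (subs_pick F (fun x => List.In x A)) => C [HC HP].
exists C; split => //; apply: simT Hu _; apply: sameset.
- by move=> x Hx; apply/HP; split => //; apply: HA.
- by move=> x /HP [].
Qed.


Definition nullish u := sim u PHI \/ sim u EPS.

Lemma L_mono e : forall (K1 K2 : lang S) w, (forall v, K1 v -> K2 v) -> L e K1 w -> L e K2 w.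
Proof.
elim: e => [|| y | a IHa b IHb | a IHa b IHb | a IHa | a IHa] K1 K2 w H /=.
- by [].
- exact: H.
- by move=> [v [-> Hv]]; exists v; split => //; apply: H.
- by move=> [?|?]; [left; exact: IHa H _|right; exact: IHb H _].
- apply: IHa => v; exact: IHb.
- move=> Hw X HX; apply: Hw => v [Hv|Hv]; apply: HX; [by left|right; exact: H].
- by move=> [v [u [H1 [H2 H3]]]]; exists v, u; split => //; split => //; apply: H.
Qed.

Lemma shuffle_cat (v z : seq S) : shuffle v z (v ++ z).
Proof.
elim: v => [|x v IH] /=; first exact: shuffle_nil_l.
case: z IH => [|y z] IH; first by rewrite cats0; exact: shuffle_nil_r.
exact: shuffle_left.
Qed.

Lemma shuffle_app (v w o z : seq S) : shuffle v w o -> shuffle v (w ++ z) (o ++ z).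
Proof.
elim => /=.
- move=> w'; exact: shuffle_nil_l.
- move=> v'; exact: shuffle_cat.
- move=> x y v' w' o' _ IH; exact: shuffle_left.
- move=> x y v' w' o' _ IH; exact: shuffle_right.
Qed.

Lemma L_cat e : forall (K1 K2 : lang S) w v,
  (forall z, K1 z -> K2 (z ++ v)) -> L e K1 w -> L e K2 (w ++ v).
Proof.
elim: e => [|| y | a IHa b IHb | a IHa b IHb | a IHa | a IHa] K1 K2 w v H /=.
- by [].
- exact: H.
- by move=> [z [-> Hz]]; exists (z ++ v); split => //; apply: H.
- by move=> [?|?]; [left; exact: IHa H _|right; exact: IHb H _].
- apply: IHa => z; exact: IHb.
- move=> Hw Y HY.
  apply: (Hw (fun z => Y (z ++ v))) => z [Hz|Hz]; apply: HY.
  + left; by apply: (IHa _ _ z v _ Hz) => z'.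
  + right; exact: H.
- move=> [v1 [w1 [H1 [H2 H3]]]]; exists v1, (w1 ++ v); split => //; split.
  + exact: H.
  + exact: shuffle_app.
Qed.

Notation EL := (@eps_lang S).

Lemma star_nil a : L (Star a) EL [::].
Proof. move=> X HX; apply: HX; by right. Qed.

Lemma star_base a w : L a EL w -> L (Star a) EL w.
Proof.
move=> H X HX; apply: (HX); left; apply: L_mono H => v Hv.
rewrite /eps_lang in Hv; subst v; apply: HX; by right.
Qed.

Lemma fork_base a w : L a EL w -> L (Fork a) EL w.
Proof. move=> H; exists w, [::]; split => //; split => //; exact: shuffle_nil_r. Qed.

Lemma cat_eps a b w v : L a EL w -> L b EL v -> L (Seq a b) EL (w ++ v).
Proof.
move=> Ha Hb /=; apply: (L_cat (K1 := EL)) Ha => z Hz.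
by rewrite /eps_lang in Hz; subst z.
Qed.

Lemma empty_phi e : (forall w, ~ L e EL w) -> sim e PHI.
Proof.
elim: e => [|| y | a IHa b IHb | a IHa b IHb | a IHa | a IHa] H.
- exact: sim_refl.
- by case: (H [::]).
- by case: (H [:: y]); exists [::].
- apply: simT (sim_plus (IHa _) (IHb _)) (sim_plus0r _).
  + move=> w h; apply: (H w); by left.
  + move=> w h; apply: (H w); by right.
- case: (classic (exists v, L b EL v)) => [[v0 Hv0]|Hn].
  + apply: simT (sim_seq (IHa _) (sim_refl _)) (sim_seq0l _).
    move=> w h; exact: (H _ (cat_eps h Hv0)).
  + apply: simT (sim_seq (sim_refl _) (IHb _)) (sim_seq0r _).
    move=> w h; apply: Hn; by exists w.
- by case: (H [::] (@star_nil a)).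
- have Ha : sim a PHI by apply: IHa => w h; exact: (H _ (fork_base h)).
  exact: simT (sim_fork Ha) (sim_fork0 S).
Qed.

Lemma null_lemma e : (forall w, L e EL w -> w = [::]) -> nullish e.
Proof.
elim: e => [|| y | a IHa b IHb | a IHa b IHb | a IHa | a IHa] H.
- left; exact: sim_refl.
- right; exact: sim_refl.
- by have := H [:: y] (ex_intro _ [::] (conj erefl erefl)).
- have [Ha|Ha] := IHa (fun w h => H w (or_introl h));
  have [Hb|Hb] := IHb (fun w h => H w (or_intror h)).
  + left; exact: simT (sim_plus Ha Hb) (sim_plus0r _).
  + right; exact: simT (sim_plus Ha Hb) (sim_plus0l _).
  + right; exact: simT (sim_plus Ha Hb) (sim_plus0r _).
  + right; exact: simT (sim_plus Ha Hb) (sim_plusI _).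
- case: (classic (exists w, L a EL w)) => [[w0 Hw0]|Hn]; last first.
    left; apply: simT (sim_seq (empty_phi _) (sim_refl _)) (sim_seq0l _).
    move=> w h; apply: Hn; by exists w.
  case: (classic (exists v, L b EL v)) => [[v0 Hv0]|Hn]; last first.
    left; apply: simT (sim_seq (sim_refl _) (empty_phi _)) (sim_seq0r _).
    move=> w h; apply: Hn; by exists w.
  have Ha : forall w, L a EL w -> w = [::].
    move=> w h; have := H _ (cat_eps h Hv0); by case: w h.
  have Hb : forall w, L b EL w -> w = [::].
    move=> w h; have := H _ (cat_eps Hw0 h); case: w h => // x w _.
    by case: w0 Hw0.
  have [Ha'|Ha'] := IHa Ha; first by left; exact: simT (sim_seq Ha' (sim_refl _)) (sim_seq0l _).
  have [Hb'|Hb'] := IHb Hb; first by left; exact: simT (sim_seq (sim_refl _) Hb') (sim_seq0r _).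
  right; exact: simT (sim_seq Ha' Hb') (sim_seq1l _).
- have [Ha|Ha] := IHa (fun w h => H w (star_base h)).
  + right; exact: simT (sim_star Ha) (sim_star0 S).
  + right; exact: simT (sim_star Ha) (sim_star1 S).
- have [Ha|Ha] := IHa (fun w h => H w (fork_base h)).
  + left; exact: simT (sim_fork Ha) (sim_fork0 S).
  + right; exact: simT (sim_fork Ha) (sim_fork1 S).
Qed.

Lemma contained_null e : contained e EPS -> nullish e.
Proof. move=> H; apply: null_lemma => w h; exact: (H EL w h). Qed.

Inductive le : B -> B -> Prop :=
| le_phi e : le PHI e
| le_refl e : le e e
| le_plus a a' b b' : le a a' -> le b b' -> le (Plus a b) (Plus a' b')
| le_seq a a' b b' : le a a' -> le b b' -> le (Seq a b) (Seq a' b')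
| le_star a a' : le a a' -> le (Star a) (Star a')
| le_fork a a' : le a a' -> le (Fork a) (Fork a').

Lemma conc_conc e : conc (conc e) = conc e.
Proof. by elim: e => //= [a -> b ->|a -> b ->|a ->]. Qed.

Lemma le_conc e e' : le e e' -> le (conc e) (conc e').
Proof.
elim => /= *; try by constructor.
Qed.

Lemma le_deriv x e e' : le e e' -> le (deriv x e) (deriv x e').
Proof.
elim => /=.
- move=> *; exact: le_phi.
- move=> *; exact: le_refl.
- move=> *; exact: le_plus.
- move=> a a' b b' H1 H2 H3 H4.
  apply: le_plus; apply: le_seq => //; exact: le_conc.
- move=> a a' H1 H2; apply: le_seq => //; exact: le_star.
- move=> *; exact: le_fork.
Qed.

Lemma conc_le e : le (conc e) e.
Proof. elim: e => /= *; by constructor. Qed.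

Lemma le_word w e e' : le e e' -> le (deriv_word w e) (deriv_word w e').
Proof. elim: w e e' => [|x w IH] e e' H //=; apply: IH; exact: le_deriv. Qed.

Lemma le_sem e e' : le e e' -> forall K w, L e K w -> L e' K w.
Proof.
elim => //=.
- move=> a a' b b' _ IH1 _ IH2 K w [h|h]; [left; exact: IH1|right; exact: IH2].
- move=> a a' b b' _ IH1 _ IH2 K w h; apply: IH1; apply: L_mono h => v; exact: IH2.
- move=> a a' _ IH K w h X HX; apply: h => v [h'|h']; apply: HX; [left; exact: IH|by right].
- move=> a a' _ IH K w [v [z [h1 [h2 h3]]]]; exists v, z; split => //; exact: IH.
Qed.

Lemma transfer r : (forall w, contained (conc (deriv_word w r)) EPS) ->
  forall w, contained (conc (deriv_word w (conc r))) EPS.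
Proof.
move=> H w K v h; apply: (H w K v); apply: le_sem h.
apply: le_conc; apply: le_word; exact: conc_le.
Qed.

Lemma deriv_word_rcons w x e : deriv_word (w ++ [:: x]) e = deriv x (deriv_word w e).
Proof. by elim: w e => [|y w IH] e //=. Qed.

Lemma filt (P : list B -> Prop) (l : list (list B)) :
  exists l', forall A, List.In A l' <-> List.In A l /\ P A.
Proof.
elim: l => [|A0 l [l' Hl']]; first by exists nil => A; split => [[]|[[]]].
case: (classic (P A0)) => HP.
- exists (cons A0 l') => A /=; split.
  + by move=> [<-|/Hl' [h1 h2]]; split => //; [left|right].
  + move=> [[<-|h1] h2]; [by left|right; exact/Hl'].
- exists l' => A /=; split.
  + by move/Hl' => [h1 h2]; split => //; right.
  + move=> [[E|h1] h2]; first by subst A0.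
    exact/Hl'.
Qed.

Section StarCase.
Variables (Fr F : list B) (q : B) (Lq : list (list B)).
Hypothesis HFr : closed Fr.
Hypothesis Hq : span Fr q.
Hypothesis HLq : forall A, List.In A Lq <->
   List.In A (subs Fr) /\ exists w, sim (sumL A) (deriv_word w q).
Hypothesis Hincl : incl (List.map (fun A => Seq (sumL A) (Star q)) Lq) F.
Hypothesis HS1 : List.In (Star q) F.
Hypothesis HS2 : List.In (Star (conc q)) F.
Hypothesis Nq : forall w, nullish (conc (deriv_word w q)).

Lemma star_reach a w : sim a (deriv_word w q) -> span F (Seq a (Star q)).
Proof.
move=> Ha.
have [A [HA HsA]] := span_norm (closed_word w HFr Hq).
have HAL : List.In A Lq by apply/HLq; split => //; exists w; exact: simC.
apply: span_sim (sim_seq (simT Ha HsA) (sim_refl _)) (span_elem _).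
apply: Hincl; exact: (List.in_map (fun A => Seq (sumL A) (Star q))).
Qed.

Lemma star_part f : List.In f (cons (Star q) (List.map (fun A => Seq (sumL A) (Star q)) Lq)) ->
  (forall x, span F (deriv x f)) /\ span F (conc f).
Proof.
move=> [<-|/List.in_map_iff [A [<- HA]]] /=.
- split; last exact: span_elem.
  move=> x; apply: (star_reach (w := [:: x])); exact: sim_refl.
- have [_ [w0 Hu]] := (iffLR (HLq A) HA).
  have Hc : nullish (conc (sumL A)).
    case: (Nq w0) => h; [left|right]; exact: simT (conc_sim Hu) h.
  split.
  + move=> x; apply: span_plus.
    * apply: (star_reach (w := w0 ++ [:: x])).
      rewrite deriv_word_rcons; exact: deriv_sim.
    * case: Hc => h.
      - apply: span_sim (simT (sim_seq h (sim_refl _)) (sim_seq0l _)) (span_phi _).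
      - apply: span_sim (simT (sim_seq h (sim_refl _)) (sim_seq1l _)) _.
        apply: (star_reach (w := [:: x])); exact: sim_refl.
  + case: Hc => h.
    * apply: span_sim (simT (sim_seq h (sim_refl _)) (sim_seq0l _)) (span_phi _).
    * apply: span_sim (simT (sim_seq h (sim_refl _)) (sim_seq1l _)) _.
      exact: span_elem.
Qed.
End StarCase.

Lemma wb_sub t t' : well_behaved t -> (forall r, subterm (Star r) t' -> subterm (Star r) t) ->
  well_behaved t'.
Proof. move=> H Hs r Hr; apply: H; exact: Hs. Qed.

Lemma main t : well_behaved t -> exists F, closed F /\ span F t.
Proof.
elim: t => [|| y | r IHr s IHs | r IHr s IHs | r IHr | r IHr] Hwb.
- exists nil; split; [by move=> f [] | exact: span_phi].
- exists (cons EPS nil); split; last by apply: span_elem; left.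
  move=> f [<-|[]]; split; [move=> x; exact: span_phi | by apply: span_elem; left].
- exists (cons (Sym y) (cons EPS nil)); split; last by apply: span_elem; left.
  move=> f [<-|[<-|[]]]; split => /=.
  + move=> x; case: (y == x); [by apply: span_elem; right; left|exact: span_phi].
  + exact: span_phi.
  + move=> x; exact: span_phi.
  + by apply: span_elem; right; left.
- have [Fr [HFr Hr]] := IHr (wb_sub Hwb (fun q h => sub_plusl _ h)).
  have [Fs [HFs Hs]] := IHs (wb_sub Hwb (fun q h => sub_plusr _ h)).
  have I1 : incl Fr (app Fr Fs) by move=> x h; apply: List.in_or_app; left.
  have I2 : incl Fs (app Fr Fs) by move=> x h; apply: List.in_or_app; right.
  exists (app Fr Fs); split; last exact: span_plus (span_mono I1 Hr) (span_mono I2 Hs).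
  move=> f hf; case: (List.in_app_or _ _ _ hf) => h.
  + have [H1 H2] := HFr f h; split; [move=> x; exact: span_mono I1 (H1 x)|exact: span_mono I1 H2].
  + have [H1 H2] := HFs f h; split; [move=> x; exact: span_mono I2 (H1 x)|exact: span_mono I2 H2].
- have [Fr [HFr Hr]] := IHr (wb_sub Hwb (fun q h => sub_seql _ h)).
  have [Fs [HFs Hs]] := IHs (wb_sub Hwb (fun q h => sub_seqr _ h)).
  set F := List.flat_map (fun A => List.map (fun C => Seq (sumL A) (sumL C)) (subs Fs)) (subs Fr).
  have SS : forall a b, span Fr a -> span Fs b -> span F (Seq a b).
    move=> a b ha hb.
    have [A [HA Ha]] := span_norm ha; have [C [HC Hc]] := span_norm hb.
    apply: span_sim (sim_seq Ha Hc) (span_elem _).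
    apply/List.in_flat_map; exists A; split => //.
    exact: (List.in_map (fun C => Seq (sumL A) (sumL C))).
  exists F; split; last exact: SS.
  move=> f /List.in_flat_map [A [HA /List.in_map_iff [C [<- HC]]]] /=.
  have IA := subs_incl HA; have IC := subs_incl HC.
  split.
  + move=> x; apply: span_plus; apply: SS.
    * exact: closed_deriv_sumL.
    * exact: span_sumL.
    * exact: closed_conc_sumL.
    * exact: closed_deriv_sumL.
  + apply: SS; exact: closed_conc_sumL.
- have Hw : forall w, contained (conc (deriv_word w r)) EPS := Hwb r (Pilot.Defs.sub_refl _).
  have [Fr [HFr Hr]] := IHr (wb_sub Hwb (fun q h => sub_star h)).
  have Hc : span Fr (conc r) := closed_conc HFr Hr.
  have [Lr HLr] := filt (fun A => exists w, sim (sumL A) (deriv_word w r)) (subs Fr).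
  have [Lc HLc] := filt (fun A => exists w, sim (sumL A) (deriv_word w (conc r))) (subs Fr).
  set P1 := cons (Star r) (List.map (fun A => Seq (sumL A) (Star r)) Lr).
  set P2 := cons (Star (conc r)) (List.map (fun A => Seq (sumL A) (Star (conc r))) Lc).
  have I1 : incl P1 (app P1 P2) by move=> x h; apply: List.in_or_app; left.
  have I2 : incl P2 (app P1 P2) by move=> x h; apply: List.in_or_app; right.
  have S1 : List.In (Star r) (app P1 P2) by apply: I1; left.
  have S2 : List.In (Star (conc r)) (app P1 P2) by apply: I2; left.
  exists (app P1 P2); split; last exact: span_elem.
  move=> f hf; case: (List.in_app_or _ _ _ hf) => h.
  + apply: (star_part HFr Hr HLr _ S2 _ h).
    * by move=> x hx; apply: I1; right.
    * move=> w; apply: contained_null; exact: Hw.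
  + have S2' : List.In (Star (conc (conc r))) (app P1 P2) by rewrite conc_conc.
    apply: (star_part HFr Hc HLc _ S2' _ h).
    * by move=> x hx; apply: I2; right.
    * move=> w; apply: contained_null; exact: transfer.
- have [Fr [HFr Hr]] := IHr (wb_sub Hwb (fun q h => sub_fork h)).
  set F := List.map (fun A => Fork (sumL A)) (subs Fr).
  have SF : forall a, span Fr a -> span F (Fork a).
    move=> a ha; have [A [HA Ha]] := span_norm ha.
    apply: span_sim (sim_fork Ha) (span_elem _).
    exact: (List.in_map (fun A => Fork (sumL A))).
  exists F; split; last exact: SF.
  move=> f hf; have [A [Hf HA]] := iffLR (List.in_map_iff _ _ _) hf.
  subst f; split; last exact: span_elem.
  move=> x /=; apply: SF; apply: closed_deriv_sumL => //; exact: subs_incl.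
Qed.

Lemma reps_lemma t (C : list B) : exists reps : list B,
  (forall r, List.In r reps -> descendant t r) /\
  (forall w c, List.In c C -> sim (deriv_word w t) c ->
     exists r, List.In r reps /\ sim (deriv_word w t) r).
Proof.
elim: C => [|c C [reps [H1 H2]]].
- exists nil; split; [by move=> r [] | by move=> w c []].
- case: (classic (exists w0, sim (deriv_word w0 t) c)) => [[w0 Hw0]|Hn].
  + exists (cons (deriv_word w0 t) reps); split.
    * move=> r [<-|h]; [by exists w0|exact: H1].
    * move=> w c' [<-|h] hs.
      - exists (deriv_word w0 t); split; [by left|exact: simT hs (simC Hw0)].
      - have [r [hr hr']] := H2 w c' h hs; exists r; split => //; by right.
  + exists reps; split => //.
    move=> w c' [<-|h] hs; first by case: Hn; exists w.
    exact: H2 w c' h hs.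
Qed.
End P.

Theorem theorem6 (S : finType) (t : beh S) :
  well_behaved t ->
  exists reps : seq (beh S),
    (forall r, List.In r reps -> descendant t r) /\
    (forall w : seq S, exists r, List.In r reps /\ sim (deriv_word w t) r).
Proof.
move=> Hwb; have [F [HF Ht]] := main Hwb.
have [reps [H1 H2]] := reps_lemma t (List.map (@sumL S) (subs F)).
exists reps; split => // w.
have [A [HA Hs]] := span_norm (closed_word w HF Ht).
apply: (H2 w (sumL A)) => //; exact: List.in_map.
Qed.
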